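(* Let $q$ be an odd prime power, $g\ge 1$, $X,T$ positive integers, and let $\mathcal{Y}$ be a hyperelliptic curve of genus $g$ over $\mathbb{F}_{q^2}$ with affine equation $y^2=f(x)$, $f(x)=x^{2g+1}+a_{2g}x^{2g}+\dots+a_0\in\mathbb{F}_{q^2}[x]$. Let $J^{\mathcal{Y}}_{\max}$ be the largest integer $J$ for which there exist pairwise distinct $\lambda_1,\dots,\lambda_J\in\mathbb{F}_{q^2}$ with $f(\lambda_j)\ne0$ such that, with $h=\prod_{j=1}^J(x-\lambda_j)$, $\mathcal{Y}$ has at least $2J+X+T+6g+2$ affine $\mathbb{F}_{q^2}$-rational points $P$ with $y(P)\ne 0$, $h(P)\ne 0$, and put $\mathcal{R}^{\mathcal{Y}}_{\max}=\frac{2J^{\mathcal{Y}}_{\max}-g}{2J^{\mathcal{Y}}_{\max}+X+T+5g+2}$. Let $$\mathcal{R}^{\mathcal{H}_q}_{\max}=\frac{L}{L+X+T+3q^2-q-2},\qquad L=mq-\frac{q(q-1)}{2},\quad m=\left\lfloor\frac{q^3-3q^2+q+1-(X+T)}{2q}\right\rfloor.$$ Then $\mathcal{R}^{\mathcal{H}_q}_{\max}>\mathcal{R}^{\mathcal{Y}}_{\max}$ if one of the following holds: (i) $X+T\ge 3(2q+3)$, $g=1$ and $q>31$; (ii) $X+T\ge 3(2q+3)$, $g>1$ and $q>5$.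
   Context: $\mathcal{R}^{\mathcal{Y}}_{\max}$ is the maximal rate of the known $X$-secure $T$-private PIR construction from hyperelliptic curves over $\mathbb{F}_{q^2}$ (rate $L/N$ with $L=2J-g$, $N=L+X+T+6g+2$), and $\mathcal{R}^{\mathcal{H}_q}_{\max}$ is the maximal rate of the PIR construction from the Hermitian curve $X^{q+1}=Y^q+Y$ over $\mathbb{F}_{q^2}$. *)

(* Defs.v *)
From HB Require Import structures.
From mathcomp Require Import all_boot all_order all_algebra all_field.
Set Implicit Arguments. Unset Strict Implicit. Unset Printing Implicit Defensive.
Import Order.TTheory GRing.Theory Num.Theory.
Local Open Scope ring_scope.

Definition good_points (F : finFieldType) (f h : {poly F}) : {set F * F} :=
  [set P : F * F | [&& P.2 ^+ 2 == f.[P.1], P.2 != 0 & h.[P.1] != 0]].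

Definition admissibleJ (F : finFieldType) (f : {poly F}) (g X T J : nat) : Prop :=
  exists s : seq F,
    [/\ uniq s, size s = J, all (fun l => f.[l] != 0) s &
        (2 * J + X + T + 6 * g + 2 <=
           #|good_points f (\prod_(l <- s) ('X - l%:P))|)%N].

Definition rateY (g X T J : nat) : rat :=
  ((2 * J)%:R - g%:R) / (2 * J + X + T + 5 * g + 2)%:R.

Definition mH (q X T : nat) : int :=
  (((q ^ 3 + q + 1)%:Z - (3 * q ^ 2 + X + T)%:Z) %/ (2 * q)%:Z)%Z.

Definition LH (q X T : nat) : int :=
  mH q X T * q%:Z - ((q * (q - 1)) %/ 2)%N%:Z.

Definition rateH (q X T : nat) : rat :=
  (LH q X T)%:~R /
  (LH q X T + (X + T + 3 * q ^ 2)%:Z - (q + 2)%:Z)%:~R.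

(* Main.v *)
Require Import Defs.
From HB Require Import structures.
From mathcomp Require Import all_boot all_order all_algebra all_field.
From mathcomp Require Import zify ring lra.
Import Order.TTheory GRing.Theory Num.Theory.
Local Open Scope ring_scope.
Lemma sqr_card (F : finFieldType) (c : F) : (#|[set y : F | y ^+ 2 == c]| <= 2)%N.
Proof.
case: (eqVneq [set y : F | y ^+ 2 == c] set0) => [->|/set0Pn [y0]]; first by rewrite cards0.
rewrite inE => /eqP Hy0.
have H2 : (#|[set y0; - y0]| <= 2)%N by rewrite cards2; case: (y0 != - y0).
apply: leq_trans H2; apply: subset_leq_card; apply/subsetP => y; rewrite !inE -Hy0 eqf_sqr; by [].
Qed.

Lemma card_good (F : finFieldType) (f : {poly F}) (s : seq F) :
  uniq s ->
  (#|good_points f (\prod_(l <- s) ('X - l%:P))| <= 2 * (#|F| - size s))%N.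
Proof.
move=> us; set h := \prod_(l <- s) _.
set B := [set x : F | h.[x] != 0].
have cB : #|B| = (#|F| - size s)%N.
  have -> : B = ~: [set x in s].
    by apply/setP => x; rewrite !inE -/(root h x) root_prod_XsubC.
  have := cardsC [set x in s]; rewrite cardsE (card_uniqP us) => <-.
  by rewrite addKn.
rewrite -cB -sum1_card.
rewrite (partition_big (fun P : F * F => P.1) (fun x => x \in B)); last first.
  by move=> P; rewrite !inE => /and3P[_ _ ->].
rewrite mulnC -sum_nat_const; apply: leq_sum => x xB.
rewrite sum1_card.
apply: (@leq_trans #|[set y : F | y ^+ 2 == f.[x]]|); last exact: sqr_card.
set A := (fun i : F * F => _).
have -> : #|A| = #|[set P.2 | P in A]|.
  rewrite card_in_imset // => [[a1 b1] [a2 b2]].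
  rewrite /A /= => /andP[_ /eqP /= e1] /andP[_ /eqP /= e2] /= e; by rewrite e1 e2 e.
apply: subset_leq_card; apply/subsetP => y /imsetP [[a b]].
rewrite /A /= => /andP[]; rewrite !inE /= => /and3P[/eqP e _ _] /eqP ea ->.
by rewrite e ea.
Qed.

Lemma polyP (Q G : int) : 7 <= Q -> 1 <= G -> (G = 1 -> 32 <= Q) ->
  0 < Q*Q*Q - 31*Q*Q - 7*Q + 14 + (G-1)*(6*Q*Q*Q+4*Q+14).
Proof.
move=> hQ hG hG1.
have hQ2 : 49 <= Q*Q by nia.
have [eG|hG2] : G = 1 \/ 2 <= G by lia.
  have h32 := hG1 eG; rewrite eG.
  have h1 : 0 <= Q*Q*(Q-32) by apply: mulr_ge0; lia.
  have h3 : 32 * 7 <= Q*Q by nia.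
  have e : Q*Q*(Q-32) = Q*Q*Q - 32*Q*Q by ring.
  have e2 : Q*Q*Q - 31*Q*Q - 7*Q + 14 + (1-1)*(6*Q*Q*Q+4*Q+14) = Q*Q*Q - 31*Q*Q - 7*Q + 14 by ring.
  have h4 : 7 * Q <= Q * Q by nia.
  lia.
have h0 : 0 <= Q*Q*(Q-7) by apply: mulr_ge0; lia.
have e0 : Q*Q*(Q-7) = Q*Q*Q - 7*Q*Q by ring.
have hQQQ : 0 <= Q*Q*Q by nia.
have h2 : 0 <= (G-2)*(6*Q*Q*Q+4*Q+14) by apply: mulr_ge0; lia.
have e2 : (G-1)*(6*Q*Q*Q+4*Q+14) = (G-2)*(6*Q*Q*Q+4*Q+14) + (6*Q*Q*Q+4*Q+14) by ring.
have h4 : 7 * Q <= Q * Q by nia.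
lia.
Qed.

Lemma key (Q G S J L : int) : 7 <= Q -> 1 <= G -> 6*Q+9 <= S ->
  4*J + S + 6*G + 2 <= 2*Q*Q -> 0 <= J -> (G = 1 -> 32 <= Q) ->
  Q*Q*Q - 4*Q*Q + 2 - S <= 2*L ->
  [/\ 0 < L, 0 < L + S + 3*Q*Q - Q - 2 &
   (2*J-G)*(L + S+3*Q*Q-Q-2) < L*(2*J+S+5*G+2)].
Proof.
move=> hQ hG hS hJ hJ0 hG1 hL.
have hQ3 : 0 <= Q*Q*(Q-7) by apply: mulr_ge0; lia.
have e0 : Q*Q*(Q-7) = Q*Q*Q - 7*Q*Q by ring.
have hQ2 : 49 <= Q*Q by nia.
have Lpos : 0 < L by lia.
set A := S + 6*G + 2.
set C := 3*Q*Q - Q - 4 - 6*G.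
have h4 : 7 * Q <= Q * Q by nia.
have hK : 0 < A + C by rewrite /A /C; lia.
have hco : 0 <= Q*Q*Q - 3*Q*Q - Q + 2*G by lia.
have hAco : (6*Q+11+6*G)*(Q*Q*Q - 3*Q*Q - Q + 2*G) <= A*(Q*Q*Q - 3*Q*Q - Q + 2*G).
  apply: ler_wpM2r => //; rewrite /A; lia.
have hP := @polyP Q G hQ hG hG1.
have hPP : 0 < (Q*Q*Q-4*Q*Q+2-S)*A - (2*Q*Q-A-2*G)*(A+C).
  have e : (Q*Q*Q-4*Q*Q+2-S)*A - (2*Q*Q-A-2*G)*(A+C) =
     A*(Q*Q*Q - 3*Q*Q - Q + 2*G) - (2*Q*Q-2*G)*C by rewrite /A /C; ring.
  have e2 : (6*Q+11+6*G)*(Q*Q*Q - 3*Q*Q - Q + 2*G) - (2*Q*Q-2*G)*C =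
     Q*Q*Q - 31*Q*Q - 7*Q + 14 + (G-1)*(6*Q*Q*Q+4*Q+14) by rewrite /C; ring.
  lia.
have hApos : 0 < A by rewrite /A; lia.
have eK : L + S + 3*Q*Q - Q - 2 = L + (A + C) by rewrite /A /C; ring.
have eY : 2*J+S+5*G+2 = (2*J - G) + A by rewrite /A; ring.
split => //; first by rewrite eK; lia.
rewrite eK eY.
suff H : (2*J-G)*(A+C) < L*A.
  have e3 : (2*J-G)*(L + (A+C)) = (2*J-G)*L + (2*J-G)*(A+C) by ring.
  have e4 : L*((2*J-G) + A) = (2*J-G)*L + L*A by ring.
  lia.
have hLA : 0 < L*A by apply: mulr_gt0.
have [hY|hY] : 2*J - G <= 0 \/ 0 < 2*J - G by lia.
  have : (2*J-G)*(A+C) <= 0 by rewrite mulr_le0_ge0 // ?hY; apply: ltW.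
  lia.
have h1 : (2*(2*J-G))*(A+C) <= (2*Q*Q-A-2*G)*(A+C).
  apply: ler_wpM2r; [exact: ltW | rewrite /A; lia].
have h2 : (Q*Q*Q-4*Q*Q+2-S)*A <= (2*L)*A by apply: ler_wpM2r; [exact: ltW|].
have e5 : (2*(2*J-G))*(A+C) = 2 * ((2*J-G)*(A+C)) by ring.
have e6 : (2*L)*A = 2*(L*A) by ring.
lia.
Qed.

Lemma ratlt (a b c d : int) : 0 < b -> 0 < d -> a * d < c * b ->
  (a%:~R / b%:~R : rat) < c%:~R / d%:~R.
Proof.
move=> hb hd h.
rewrite ltr_pdivrMr ?ltr0z // mulrAC ltr_pdivlMr ?ltr0z //.
by rewrite -!intrM ltr_int.
Qed.

Theorem proposition4p9
  (q p k : nat) (F : finFieldType) (g X T : nat) (f : {poly F}) (J : nat) :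
  prime p -> (0 < k)%N -> q = (p ^ k)%N -> odd q ->
  #|F| = (q ^ 2)%N ->
  (1 <= g)%N -> (0 < X)%N -> (0 < T)%N ->
  f \is monic -> size f = (2 * g + 2)%N -> separable_poly f ->
  admissibleJ f g X T J ->
  (forall J' : nat, admissibleJ f g X T J' -> (J' <= J)%N) ->
  (3 * (2 * q + 3) <= X + T)%N ->
  ((g == 1%N) && (31 < q)%N) || ((1 < g)%N && (5 < q)%N) ->
  rateY g X T J < rateH q X T.
Proof.
move=> _ _ _ oq cF hg _ _ _ _ _ [s [us sz _ hb]] _ hS hc.
have hc' := @card_good F f s us; rewrite cF sz in hc'.
have hJ : (4 * J + (X + T) + 6 * g + 2 <= 2 * (q * q))%N.
  have := leq_trans hb hc'; rewrite expnS expn1; lia.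
have hq7 : (7 <= q)%N.
  case/orP: hc => /andP[_ h]; first lia.
  have : q != 6%N by apply/eqP => e; rewrite e in oq.
  lia.
have hg1 : g = 1%N -> (32 <= q)%N.
  move=> e; move: hc; rewrite e /=; lia.
set N : int := ((q ^ 3 + q + 1)%:Z - (3 * q ^ 2 + X + T)%:Z).
have hd : (2 * q)%:Z != 0 by rewrite eqz_nat; lia.
have eN := divz_eq N (2 * q)%:Z.
have r0 := modz_ge0 N hd.
have r1 := ltz_mod N hd.
have hw := leq_divM (q * (q - 1)) 2.
set w := ((q * (q - 1)) %/ 2)%N in hw.
have eL : LH q X T = mH q X T * q%:Z - w%:Z by [].
set m := mH q X T in eL.
have em : mH q X T = (N %/ (2 * q)%:Z)%Z by [].
have q3 : (q ^ 3 = q * q * q)%N by rewrite !expnS expn0 muln1 mulnA.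
have q2 : (q ^ 2 = q * q)%N by rewrite !expnS expn0 muln1.
have eQ : (2 * q)%:Z = 2 * q%:Z by rewrite PoszM.
rewrite -em in eN.
clear hb hc' hc.
have eN' : N = 2 * (m * q%:Z) + (N %% (2 * q)%:Z)%Z by rewrite {1}eN eQ; ring.
have eNv : N = q%:Z * q%:Z * q%:Z + q%:Z + 1 - (3 * (q%:Z * q%:Z) + X%:Z + T%:Z).
  rewrite /N q3 q2; lia.
rewrite eQ in r1.
have hL : q%:Z * q%:Z * q%:Z - 4 * (q%:Z * q%:Z) + 2 - (X + T)%:Z <= 2 * LH q X T.
  rewrite eL; move: r1; rewrite normrM /= => r1.
  have hw' : (w * 2 <= q * q - q)%N by rewrite mulnBr muln1 in hw.
  have hqq : (q <= q * q)%N by rewrite leq_pmulr //; lia.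
  move: (N %% _)%Z r0 r1 eN' eNv => r r0 r1 eN' eNv.
  clear -r0 r1 eN' eNv hw' hqq.
  lia.
clear hw eN eN' eNv r0 r1 em eL.
have K := @key q%:Z g%:Z (X+T)%:Z J%:Z (LH q X T).
rewrite /rateY /rateH !pmulrn -intrB.
case: K; try lia.
move: (LH q X T) => L Lp Dp Ineq.
apply: ratlt; first lia.
  rewrite q2; lia.
rewrite q2; move: Ineq; clear.
lia.
Qed.
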